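(* Let $k\ge2$ and let $\mathcal{H}\subset\mathbb{CP}^3$ be an essential arrangement of $2k$ planes such that every plane in $\mathcal{H}$ meets the other planes of $\mathcal{H}$ along exactly $k+1$ distinct lines. Then $\mathcal{H}$ is a Hirzebruch arrangement.
   Context: An arrangement is a finite set of distinct hyperplanes; it is essential if the common intersection of its members is empty. $\mathcal{L}$ is the set of non-empty proper intersections of members and $m_L$ the number of members containing $L$. An essential arrangement $\mathcal{H}\subset\mathbb{CP}^n$ is Hirzebruch if (H1) $m_L/\operatorname{codim}L\le|\mathcal{H}|/(n+1)$ for all $L\in\mathcal{L}$, and (H2) every $H\in\mathcal{H}$ meets the members of $\mathcal{H}\setminus\{H\}$ along exactly $\big(1-\frac{2}{n+1}\big)|\mathcal{H}|+1$ distinct codimension-2 subspaces. *)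

(* Defs.v *)
From HB Require Import structures.
From mathcomp Require Import all_boot all_order all_algebra.
From mathcomp Require Import complex.
From mathcomp Require Import reals.
Set Implicit Arguments. Unset Strict Implicit. Unset Printing Implicit Defensive.
Import Order.TTheory GRing.Theory Num.Theory.
Local Open Scope ring_scope.

(* Projective space P^n over a field F is modelled as P(F^(n+1)): a projective
   subspace is a linear subspace of row vectors 'rV[F]_(n.+1), represented by a
   square matrix 'M[F]_(n.+1) through its row space (mxalgebra).
   The projective subspace is empty iff the row space is 0; its projective
   codimension is (n+1) - rank.  A hyperplane of P^n is a subspace of rank n. *)

Section Arr.
Variables (F : fieldType) (n m : nat).
Implicit Types (A : 'I_m -> 'M[F]_n.+1) (L : 'M[F]_n.+1).

Definition is_arrangement A : Prop :=
  (forall i, \rank (A i) = n) /\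
  (forall i j, i != j -> ~~ (A i == A j)%MS).

Definition meet_of A (S : {set 'I_m}) : 'M[F]_n.+1 := (\bigcap_(i in S) A i)%MS.

Definition essential A : Prop := \rank (meet_of A setT) = 0%N.

Definition pcodim L : nat := (n.+1 - \rank L)%N.

Definition in_poset A L : Prop :=
  exists S : {set 'I_m}, S != set0 /\ (L == meet_of A S)%MS
    /\ (0 < \rank L)%N /\ (\rank L < n.+1)%N.

Definition mult A L : nat := #|[set i | (L <= A i)%MS]|.

(* the distinct codimension-2 subspaces along which A i meets the other
   members (subspaces compared through the canonical representative <<_>>) *)
Definition meet_lines A (i : 'I_m) : seq 'M[F]_n.+1 :=
  undup [seq <<(A i :&: A j)%MS>>%MS | j <- enum 'I_m &
          (j != i) && (\rank (A i :&: A j)%MS == n.+1 - 2)%N].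

Definition Hirzebruch A : Prop :=
  is_arrangement A /\ essential A /\
  (forall L, in_poset A L ->
     ((mult A L)%:R / (pcodim L)%:R : rat) <= m%:R / n.+1%:R) /\
  (forall i, ((size (meet_lines A i))%:R : rat)
              = (1 - 2%:R / n.+1%:R) * m%:R + 1).

End Arr.

(* Main.v *)
Require Import Defs.
From HB Require Import structures.
From mathcomp Require Import all_boot all_order all_algebra.
From mathcomp Require Import complex.
From mathcomp Require Import reals.
From mathcomp Require Import zify ring.
Import Order.TTheory GRing.Theory Num.Theory.
Local Open Scope ring_scope.

Section Aux.
Variables (F : fieldType) (m : nat) (A : 'I_m -> 'M[F]_4).
Hypothesis arr : is_arrangement A.

Lemma eq_of_rank (X Y : 'M[F]_4) : (X <= Y)%MS -> \rank X = \rank Y -> (X == Y)%MS.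
Proof. by move=> sXY rXY; rewrite -(mxrank_leqif_eq sXY).2 rXY. Qed.

Lemma cap2 i j : i != j -> \rank (A i :&: A j)%MS = 2%N.
Proof.
move=> ij; have [rk dst] := arr.
have := mxrank_sum_cap (A i) (A j); rewrite !rk.
have le4 : (\rank (A i + A j)%MS <= 4)%N by apply: rank_leq_col.
have ge3 : (3 <= \rank (A i + A j)%MS)%N by rewrite -{1}(rk i) mxrankS // addsmxSl.
have ne3 : \rank (A i + A j)%MS != 3%N.
  apply/eqP=> r3; move: (dst i j ij); apply/negP/negPn.
  have e1 : (A i == A i + A j)%MS by apply: eq_of_rank; rewrite ?addsmxSl ?rk ?r3.
  have e2 : (A j == A i + A j)%MS by apply: eq_of_rank; rewrite ?addsmxSr ?rk ?r3.
  by apply/eqmxP; exact: eqmx_trans (eqmxP e1) (eqmx_sym (eqmxP e2)).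
lia.
Qed.

Lemma line_bound (L : 'M[F]_4) h : \rank L = 2%N -> (L <= A h)%MS ->
  (size (meet_lines A h) <= 1 + #|~: [set j | (L <= A j)%MS]|)%N.
Proof.
move=> rL sLh.
rewrite -(size_image (fun j => <<(A h :&: A j)%MS>>%MS)).
apply: (@uniq_leq_size _ _ (<<L>>%MS :: _)); first exact: undup_uniq.
move=> x; rewrite mem_undup => /mapP [j]; rewrite mem_filter => /andP [/andP [jh _] _] ->.
case: (boolP (L <= A j)%MS) => sLj.
  rewrite in_cons; apply/orP; left; apply/eqP; apply: eq_genmx; apply: eqmx_sym; apply/eqmxP.
  apply: eq_of_rank; first by rewrite sub_capmx sLh.
  by rewrite rL cap2 // eq_sym.
by rewrite in_cons; apply/orP; right; apply: image_f; rewrite !inE.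
Qed.

Lemma point_bound (L : 'M[F]_4) h : \rank L = 1%N -> ~~ (L <= A h)%MS ->
  (#|[set j | (L <= A j)%MS]| <= size (meet_lines A h))%N.
Proof.
move=> rL nLh.
rewrite cardE -(size_map (fun j => <<(A h :&: A j)%MS>>%MS)).
apply: uniq_leq_size.
  rewrite map_inj_in_uniq ?enum_uniq // => j1 j2.
  rewrite !mem_enum !inE => s1 s2 e.
  have h1 : h != j1 by apply: contraNneq nLh => ->.
  have h2 : h != j2 by apply: contraNneq nLh => ->.
  apply/eqP; apply: contraNT nLh => j12.
  have E : ((A h :&: A j1) == (A h :&: A j2))%MS.
    have E0 : (<<(A h :&: A j1)%MS>> == <<(A h :&: A j2)%MS>>)%MS.
      by rewrite e; apply/andP; split; apply: submx_refl.
    by rewrite !genmxE in E0.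
  case/andP: E => E1 E2.
  have X12 : ((A h :&: A j1) <= (A j1 :&: A j2))%MS.
    by rewrite sub_capmx capmxSr (submx_trans E1) // capmxSr.
  have /andP [_ E4] : ((A h :&: A j1) == (A j1 :&: A j2))%MS.
    by apply: eq_of_rank X12 _; rewrite !cap2.
  apply: (submx_trans _ (capmxSl (A h) (A j1))).
  by apply: submx_trans E4; rewrite sub_capmx s1 s2.
move=> x /mapP [j]; rewrite mem_enum inE => sLj ->.
have hj : j != h by apply: contraNneq nLh => <-.
rewrite mem_undup; apply: map_f; rewrite mem_filter hj /= mem_enum andbT.
by rewrite cap2 // eq_sym.
Qed.

End Aux.

Lemma ratle (a b c : nat) : (0 < b)%N -> (a * 4 <= c * b)%N ->
  ((a%:R / b%:R : rat) <= c%:R / 4%:R).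
Proof.
move=> b0 h.
rewrite ler_pdivrMr ?ltr0n // mulrAC ler_pdivlMr ?ltr0n // -!natrM ler_nat.
by [].

Qed.

Theorem lemma6p12 (R : realType) (k : nat) (A : 'I_(2 * k) -> 'M[R[i]]_4) :
  (2 <= k)%N ->
  is_arrangement A ->
  essential A ->
  (forall j, size (meet_lines A j) = k.+1) ->
  Hirzebruch A.
Proof.
move=> k2 arr ess hsz.
have [rk dst] := arr.
split=> //; split=> //; split; last first.
  move=> i; rewrite hsz -addn1 natrD natrM.
  by field.
move=> L [S [S0 [eLS [r0 r4]]]].
set M := [set j | (L <= A j)%MS].
have key : (mult A L * 4 <= 2 * k * pcodim L)%N.
  rewrite /pcodim /mult -/M.
  have: (\rank L = 1 \/ \rank L = 2 \/ \rank L = 3)%N by lia.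
  case=> [r1|[r2|r3]].
  - case: (boolP [exists h, ~~ (L <= A h)%MS]) => [/existsP [h nh] | /existsPn all].
      have := @point_bound _ _ A arr L h r1 nh; rewrite hsz r1 -/M; lia.
    have : (L <= meet_of A setT)%MS.
      by apply/sub_bigcapmxP => i _; move: (all i); rewrite negbK.
    move/mxrankS; rewrite ess; lia.
  - case: (set_0Vmem M) => [-> | [h hM]]; first by rewrite cards0.
    have hh : (L <= A h)%MS by move: hM; rewrite inE.
    have := @line_bound _ _ A arr L h r2 hh; rewrite hsz.
    have := cardsC M; rewrite card_ord r2; move=> H1; rewrite -/M; lia.
  - have : (#|M| <= 1)%N.
      case: (set_0Vmem M) => [-> | [h hM]]; first by rewrite cards0.
      suff: M \subset [set h] by move/subset_leq_card; rewrite cards1.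
      apply/subsetP => j.
      rewrite !inE => hj; move: hM; rewrite inE => hh.
      apply/negPn/negP => jh.
      have e1 : (L == A h)%MS by apply: eq_of_rank; rewrite ?rk.
      have e2 : (L == A j)%MS by apply: eq_of_rank; rewrite ?rk.
      move: (dst j h jh); apply/negP/negPn; apply/eqmxP.
      exact: eqmx_trans (eqmx_sym (eqmxP e2)) (eqmxP e1).
    rewrite r3; lia.
apply: ratle => //.
rewrite /pcodim; lia.
Qed.
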